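(* Let $\mathcal{W}$ be a $d_2$-dimensional subspace of $\mathbb{R}^n$ and $\mathcal{S}$ a $d_1$-dimensional subspace of $\mathbb{R}^n$ with $d_1 \le d_2$. Let $\mathbf{W} \in \mathbb{R}^{n\times d_2}$ and $\mathbf{S} \in \mathbb{R}^{n\times d_1}$ be matrices whose columns are orthonormal bases of $\mathcal{W}$ and $\mathcal{S}$, and let $\mathbf{W}^\top \mathbf{S} = \mathbf{U}\mathbf{\Sigma}\mathbf{V}^\top$ be a (thin) singular value decomposition with $\mathbf{U} \in \mathbb{R}^{d_2\times d_1}$ having orthonormal columns, $\mathbf{\Sigma} \in \mathbb{R}^{d_1\times d_1}$ diagonal with nonnegative entries, and $\mathbf{V} \in \mathbb{R}^{d_1\times d_1}$ orthogonal. Then the $d_1$-dimensional subspace $\mathcal{S}' = \mathrm{span}(\mathbf{W}\mathbf{U})$, which is contained in $\mathcal{W}$, is a subspace projection of $\mathcal{S}$ onto $\mathcal{W}$, i.e. $$\mathcal{S}' \in \underset{\mathcal{S}'' \subseteq \mathcal{W},\ \dim \mathcal{S}'' = d_1}{\operatorname{argmin}}\ \rho(\mathcal{S}, \mathcal{S}''),$$ where $\rho$ denotes the geodesic distance on the Grassmann manifold $\mathsf{Gr}(d_1, n)$.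
   Context: The Grassmann manifold $\mathsf{Gr}(d,n)$ is the set of $d$-dimensional linear subspaces of $\mathbb{R}^n$. The geodesic distance between two $d$-dimensional subspaces $\mathcal{A}, \mathcal{B}$ is $\rho(\mathcal{A},\mathcal{B}) = \big(\sum_{i=1}^{d} \theta_i^2\big)^{1/2}$, where $\theta_1,\dots,\theta_d \in [0,\pi/2]$ are the canonical angles between $\mathcal{A}$ and $\mathcal{B}$ (the arccosines of the singular values of $\mathbf{A}^\top\mathbf{B}$ for orthonormal basis matrices $\mathbf{A},\mathbf{B}$). The subspace projection $\omega(\mathcal{S})$ of a $d_1$-dimensional subspace $\mathcal{S}$ onto a $d_2$-dimensional subspace $\mathcal{W}$ ($d_2 \ge d_1$) is defined as a $d_1$-dimensional subspace $\mathcal{S}' \subseteq \mathcal{W}$ minimizing $\rho(\mathcal{S}, \mathcal{S}')$. *)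

(* Defs.v *)
From HB Require Import structures.
From mathcomp Require Import all_boot all_order all_algebra.
From mathcomp Require Import all_classical all_reals all_analysis.
Set Implicit Arguments. Unset Strict Implicit. Unset Printing Implicit Defensive.
Import Order.TTheory GRing.Theory Num.Theory.
Local Open Scope ring_scope.

(* Vectors of R^n are row vectors 'rV_n; a linear subspace of R^n is the row
   space (mxalgebra, %MS) of a matrix X : 'M_(m, n).  A "basis matrix" as in
   the paper is an n x d matrix A with orthonormal COLUMNS; the subspace it
   spans is the row space of A^T. *)

Definition orthonormal_cols (R : realType) (n d : nat) (A : 'M[R]_(n, d)) : Prop :=
  A^T *m A = 1%:M.

Definition onbasis_of (R : realType) (n d m : nat) (A : 'M[R]_(n, d))
    (X : 'M[R]_(m, n)) : Prop :=
  orthonormal_cols A /\ (A^T == X)%MS.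

Definition singular_values_of (R : realType) (d : nat) (M : 'M[R]_d)
    (s : 'rV[R]_d) : Prop :=
  (forall i, 0 <= s 0 i) /\
  exists U V : 'M[R]_d, orthonormal_cols U /\ orthonormal_cols V /\
    M = U *m diag_mx s *m V^T.

Definition geodesic_dist (R : realType) (n d m1 m2 : nat)
    (X : 'M[R]_(m1, n)) (Y : 'M[R]_(m2, n)) (r : R) : Prop :=
  \rank X = d /\ \rank Y = d /\
  exists (A B : 'M[R]_(n, d)) (s : 'rV[R]_d),
    onbasis_of A X /\ onbasis_of B Y /\ singular_values_of (A^T *m B) s /\
    r = Num.sqrt (\sum_(i < d) (acos (s 0 i)) ^+ 2).

(* Xp is a subspace projection of the d1-dimensional subspace Ssp onto Wsp:
   Xp is a d1-dimensional subspace of Wsp minimizing rho(Ssp, .) among all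
   d1-dimensional subspaces of Wsp (every subspace of R^n is the row space
   of some n x n matrix). *)
Definition subspace_projection (R : realType) (n d1 m1 m2 m3 : nat)
    (Ssp : 'M[R]_(m1, n)) (Wsp : 'M[R]_(m2, n)) (Xp : 'M[R]_(m3, n)) : Prop :=
  (Xp <= Wsp)%MS /\ \rank Xp = d1 /\
  exists r : R, geodesic_dist d1 Ssp Xp r /\
    forall Y : 'M[R]_n, (Y <= Wsp)%MS -> \rank Y = d1 ->
      forall r' : R, geodesic_dist d1 Ssp Y r' -> r <= r'.

(* Main.v *)
Require Import Defs.
From HB Require Import structures.
From mathcomp Require Import all_boot all_order all_algebra.
From mathcomp Require Import all_classical all_reals all_analysis.
From mathcomp Require Import lra ring zify.
Import Order.TTheory GRing.Theory Num.Theory.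
Set Implicit Arguments. Unset Strict Implicit. Unset Printing Implicit Defensive.
Local Open Scope ring_scope.

Section Helpers.
Variable R : realType.

Definition nrm2 k (v : 'rV[R]_k) : R := \sum_i v 0 i ^+ 2.

Lemma nrm2E k (v : 'rV[R]_k) : nrm2 v = (v *m v^T) 0 0.
Proof. rewrite /nrm2 !mxE; apply: eq_bigr => i _; by rewrite mxE expr2. Qed.

Lemma nrm2_ge0 k (v : 'rV[R]_k) : 0 <= nrm2 v.
Proof. by apply: sumr_ge0 => i _; rewrite sqr_ge0. Qed.

Lemma nrm2_iso p q (C : 'M[R]_(p, q)) (v : 'rV[R]_p) :
  C *m C^T = 1%:M -> nrm2 (v *m C) = nrm2 v.
Proof. by move=> h; rewrite !nrm2E trmx_mul mulmxA -(mulmxA v) h mulmx1. Qed.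

Lemma nrm2_proj p q r (X : 'M[R]_(r, p)) (C : 'M[R]_(p, q)) (v : 'rV[R]_r) :
  X *m C *m C^T = X -> nrm2 (v *m X *m C) = nrm2 (v *m X).
Proof.
move=> h; rewrite !nrm2E !trmx_mul !mulmxA -(mulmxA v X C) -(mulmxA v (X *m C)) h //.
Qed.

Lemma nrm2_contr p q (C : 'M[R]_(p, q)) (v : 'rV[R]_p) :
  C^T *m C = 1%:M -> nrm2 (v *m C) <= nrm2 v.
Proof.
move=> h; have := nrm2_ge0 (v - v *m C *m C^T).
have -> : nrm2 (v - v *m C *m C^T) = nrm2 v - nrm2 (v *m C).
  rewrite !nrm2E !linearB /= !trmx_mul !trmxK !mulmxBl !mulmxA.
  have e : v *m C *m C^T *m C *m C^T *m v^T = v *m C *m C^T *m v^T.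
    by rewrite -(mulmxA (v *m C) C^T C) h mulmx1.
  rewrite e !mxE; lra.
by rewrite subr_ge0.
Qed.

Lemma nrm2_diag k (y : 'rV[R]_k) (s : 'rV[R]_k) :
  nrm2 (y *m diag_mx s) = \sum_i (y 0 i * s 0 i) ^+ 2.
Proof. by rewrite /nrm2; apply: eq_bigr => i _; rewrite mul_mx_diag mxE. Qed.

Lemma nrm2_delta k (i : 'I_k) (s : 'rV[R]_k) :
  nrm2 (delta_mx 0 i *m diag_mx s) = s 0 i ^+ 2.
Proof.
rewrite nrm2_diag (bigD1 i) //= big1 ?addr0; first by rewrite mxE !eqxx mul1r.
move=> j hj; rewrite mxE eqxx /=; case: eqP hj => [->|_ _]; [by move/eqP|by rewrite mul0r expr0n].
Qed.

Lemma nrm2_delta1 k (i : 'I_k) : nrm2 (delta_mx 0 i : 'rV[R]_k) = 1.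
Proof.
have := nrm2_delta i (const_mx 1); rewrite mxE expr1n => <-.
congr nrm2; apply/matrixP => a b; rewrite mul_mx_diag !mxE mulr1 //.
Qed.

End Helpers.
Section Comb.
Variable R : realType.

Lemma seq_max (x : R) (s : seq R) :
  exists2 m, m \in x :: s & forall y, y \in x :: s -> y <= m.
Proof.
elim: s x => [|z s IH] x.
  by exists x; rewrite ?mem_head // => y; rewrite inE => /eqP ->.
have [m hm hb] := IH z.
have [hxm|hxm] := leP x m.
  exists m; first by rewrite inE hm orbT.
  by move=> y; rewrite inE => /orP [/eqP ->|/hb].
exists x; first by rewrite mem_head.
move=> y; rewrite inE => /orP [/eqP ->//|/hb hy].
by apply: le_trans hy _; apply: ltW.
Qed.

Lemma seq_dom (f : R -> R) (a b : seq R) :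
  size a = size b ->
  (forall x, x \in a -> 0 <= x) -> (forall y, y \in b -> y <= 1) ->
  (forall x y, 0 <= x -> x <= y -> y <= 1 -> f y <= f x) ->
  (forall t : R, (count (fun x => (t < x)%R) a <= count (fun x => (t < x)%R) b)%N) ->
  \sum_(y <- b) f y <= \sum_(x <- a) f x.
Proof.
move: {2}(size a) (erefl (size a)) => n.
elim: n a b => [|n IH] a b ha hab.
  by move: ha hab => /size0nil -> /esym/size0nil ->; rewrite !big_nil.
case: a ha hab => [//|x0 a0] ha hab ha0 hb1 hf hc.
case: b hab hb1 hc => [//|y0 b0] hab hb1 hc.
have [xa hxa hxb] := seq_max x0 a0.
have [yb hyb hyb'] := seq_max y0 b0.
set a := x0 :: a0 in ha hab ha0 hc hxa hxb *.
set b := y0 :: b0 in hab hb1 hc hyb hyb' *.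
have pa := perm_to_rem hxa; have pb := perm_to_rem hyb.
have hxy : xa <= yb.
  have := hc yb; rewrite leqNgt.
  have -> : count (fun x => yb < x) b = 0%N.
    apply/eqP; rewrite -leqn0 leqNgt -has_count; apply/hasPn => y /hyb'.
    by rewrite leNgt.
  rewrite -has_count => /hasPn /(_ _ hxa); by rewrite -leNgt.
rewrite (perm_big _ pa) (perm_big _ pb) !big_cons.
apply: lerD.
  apply: hf => //; [exact: ha0|exact: hb1].
apply: IH.
- by rewrite size_rem // ha.
- by rewrite size_rem // size_rem // -hab.
- by move=> x /mem_rem /ha0.
- by move=> y /mem_rem /hb1.
- exact: hf.
move=> t; have := hc t.
rewrite (permP pa) (permP pb) /=.
have [txa|txa] := ltP t xa.
  have -> : t < yb by apply: lt_le_trans hxy.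
  by rewrite !add1n ltnS.
have -> : count (fun x => t < x) (rem xa a) = 0%N.
  apply/eqP; rewrite -leqn0 leqNgt -has_count; apply/hasPn => y /mem_rem /hxb hy.
  by rewrite -leNgt (le_trans hy txa).
by [].
Qed.

Lemma acos_le (x y : R) : -1 <= x -> x <= y -> y <= 1 -> acos y <= acos x.
Proof.
move=> h1 hxy h2.
have hx : -1 <= x <= 1 by rewrite h1 (le_trans hxy h2).
have hy : -1 <= y <= 1 by rewrite h2 (le_trans h1 hxy).
rewrite leNgt; apply/negP => hlt.
have ix : acos x \in `[0, pi] by rewrite in_itv /= acos_ge0 ?acos_lepi.
have iy : acos y \in `[0, pi] by rewrite in_itv /= acos_ge0 ?acos_lepi.
have := hlt; rewrite -(ltr_cos ix iy) !acosK ?in_itv //= => hyx.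
by move: (le_lt_trans hxy hyx); rewrite ltxx.
Qed.

End Comb.
Section Key.
Variable R : realType.

Lemma rank_row_mx_le m n1 n2 (X : 'M[R]_(m, n1)) (Y : 'M[R]_(m, n2)) :
  (\rank (row_mx X Y) <= \rank X + \rank Y)%N.
Proof.
have -> : row_mx X Y = row_mx X 0 + row_mx 0 Y by rewrite add_row_mx addr0 add0r.
by apply: leq_trans (mxrank_add _ _) _; rewrite rank_row_mx0 rank_row_0mx.
Qed.

Definition mask k (P : pred 'I_k) : 'M[R]_k := diag_mx (\row_i (P i)%:R).

Lemma rank_mask k (P : pred 'I_k) : (\rank (mask P) <= count P (enum 'I_k))%N.
Proof.
rewrite /mask diag_mx_sum_delta enumT.
have H : forall r : seq 'I_k, (\rank (\sum_(i <- r) ((\row_i0 (P i0)%:R) ord0 i *: (delta_mx i i : 'M[R]_k)))%R <= count P r)%N.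
  elim=> [|i r IH]; first by rewrite big_nil mxrank0.
  rewrite big_cons /=; apply: leq_trans (mxrank_add _ _) _.
  rewrite mxE; case: (P i) => /=; last by rewrite scale0r mxrank0.
  by rewrite scale1r mxrank_delta add1n ltnS.
by rewrite -enumT; apply: leq_trans (H _); rewrite enumT.
Qed.

Lemma mask_compl k (P : pred 'I_k) : 1%:M - mask P = mask (predC P).
Proof.
apply/matrixP => a b; rewrite !mxE; case: eqP => _ /=; last by rewrite subr0.
by case: (P a) => /=; rewrite ?subrr ?subr0.
Qed.

Lemma mask_zero k (P : pred 'I_k) (y : 'rV[R]_k) i :
  y *m mask P = 0 -> P i -> y 0 i = 0.
Proof.
move=> /matrixP /(_ 0 i); rewrite /mask mul_mx_diag !mxE => h hi.
by move: h; rewrite hi mulr1.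
Qed.

Lemma key d (N Q P Dp G : 'M[R]_d) (s Sig : 'rV[R]_d) (t : R) :
  Q^T *m Q = 1%:M -> P^T *m P = 1%:M -> N = Q *m diag_mx s *m P^T ->
  N = Dp *m diag_mx Sig *m G -> G *m G^T = 1%:M ->
  (forall v, nrm2 (v *m Dp) <= nrm2 v) ->
  (forall i, 0 <= Sig 0 i) -> 0 <= t ->
  (count (fun i => (t < s 0 i)%R) (enum 'I_d) <= count (fun i => (t < Sig 0 i)%R) (enum 'I_d))%N.
Proof.
move=> hQ hP hN1 hN2 hG hDp hSig ht.
set K := (fun i => t < s 0 i) : pred 'I_d.
set L := (fun i => t < Sig 0 i) : pred 'I_d.
rewrite leqNgt; apply/negP => hlt.
set Z := row_mx (1%:M - mask K) (Q^T *m Dp *m mask L).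
have hrk : (\rank Z < d)%N.
  apply: leq_ltn_trans (rank_row_mx_le _ _) _.
  rewrite mask_compl.
  have h1 := rank_mask (predC K).
  have h2 : (\rank (Q^T *m Dp *m mask L) <= count L (enum 'I_d))%N.
    exact: leq_trans (mxrankM_maxr _ _) (rank_mask L).
  have h3 := count_predC K (enum 'I_d); rewrite size_enum_ord in h3.
  lia.
have : kermx Z != 0.
  by rewrite -mxrank_eq0 mxrank_ker; lia.
case/rowV0Pn => y; rewrite sub_kermx mul_mx_row row_mx_eq0 => /andP [/eqP hy1 /eqP hy2] hy0.
rewrite mask_compl in hy1.
set z := y *m Q^T *m Dp.
have hyK : forall i, ~~ K i -> y 0 i = 0.
  by move=> i hi; apply: (mask_zero hy1).
have hzL : forall i, L i -> z 0 i = 0.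
  by move=> i hi; apply: (mask_zero (P := L)); rewrite // /z -!mulmxA (mulmxA Q^T).
have [i0 hi0] : exists i, y 0 i != 0.
  case: (pickP (fun i => y 0 i != 0)) => [i hi|h0]; first by exists i.
  move: hy0; have -> : y = 0; last by rewrite eqxx.
  by apply/matrixP => a b; rewrite ord1 mxE; move: (h0 b) => /negbFE/eqP.
have hKi0 : K i0 by apply: contraR hi0 => /hyK ->.
have eA1 : nrm2 (y *m Q^T *m N) = nrm2 (y *m diag_mx s).
  rewrite hN1 !mulmxA -(mulmxA y Q^T Q) hQ mulmx1 nrm2_iso //.
  by rewrite trmxK.
have eA2 : nrm2 (y *m Q^T *m N) = nrm2 (z *m diag_mx Sig).
  by rewrite hN2 !mulmxA nrm2_iso // /z !mulmxA.
have hz : nrm2 z <= nrm2 y.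
  apply: le_trans (hDp _) _; rewrite nrm2_iso //; by rewrite trmxK.
have ineq1 : t ^+ 2 * nrm2 y < nrm2 (y *m diag_mx s).
  rewrite nrm2_diag /nrm2 mulr_sumr (bigD1 i0) //= [X in _ < X](bigD1 i0) //=.
  apply: ltr_leD.
    have hs : t < s 0 i0 := hKi0.
    have hyy : 0 < y 0 i0 ^+ 2 by rewrite lt_def sqrf_eq0 hi0 sqr_ge0.
    rewrite exprMn mulrC ltr_pM2l //; nra.
  apply: ler_sum => i _.
  case hK : (K i); last by rewrite hyK ?hK // mul0r expr0n /= mulr0.
  have hs : t < s 0 i := hK.
  rewrite exprMn mulrC; apply: ler_wpM2l; [exact: sqr_ge0|nra].
have ineq2 : nrm2 (z *m diag_mx Sig) <= t ^+ 2 * nrm2 y.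
  apply: le_trans (_ : t ^+ 2 * nrm2 z <= _); last first.
    by apply: ler_wpM2l => //; rewrite sqr_ge0.
  rewrite nrm2_diag /nrm2 mulr_sumr; apply: ler_sum => i _.
  case hL : (L i); first by rewrite hzL ?hL // mul0r expr0n /= mulr0.
  have hs : Sig 0 i <= t by rewrite leNgt; apply/negbT.
  have := hSig i => hS0.
  rewrite exprMn [X in _ <= X]mulrC; apply: ler_wpM2l; [exact: sqr_ge0|nra].
move: ineq1 ineq2; rewrite -eA1 eA2; lra.
Qed.

End Key.

Theorem lemma3 (R : realType) (n d1 d2 : nat)
    (W : 'M[R]_(n, d2)) (S : 'M[R]_(n, d1))
    (U : 'M[R]_(d2, d1)) (Sig : 'rV[R]_d1) (V : 'M[R]_d1) :
  (d1 <= d2)%N ->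
  orthonormal_cols W -> orthonormal_cols S ->
  orthonormal_cols U -> orthonormal_cols V ->
  (forall i, 0 <= Sig 0 i) ->
  W^T *m S = U *m diag_mx Sig *m V^T ->
  subspace_projection d1 (S^T) (W^T) ((W *m U)^T).
Proof.
move=> hd hW hS hU hV hSig hsvd.
rewrite /orthonormal_cols in hW hS hU hV.
have rk : forall p q (C : 'M[R]_(p, q)), C^T *m C = 1%:M -> \rank C^T = q.
  move=> p q C hC; apply/eqP; rewrite eqn_leq rank_leq_row /=.
  by have := mxrankM_maxl C^T C; rewrite hC mxrank1.
have hWU : (W *m U)^T *m (W *m U) = 1%:M.
  by rewrite trmx_mul -mulmxA (mulmxA W^T) hW mul1mx hU.
have hSt : S^T *m W = V *m diag_mx Sig *m U^T.
  have -> : S^T *m W = (W^T *m S)^T by rewrite trmx_mul trmxK.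
  by rewrite hsvd !trmx_mul trmxK tr_diag_mx mulmxA.
have hUWS : U^T *m W^T *m S = diag_mx Sig *m V^T.
  by rewrite -mulmxA hsvd !mulmxA hU mul1mx.
have hSig1 : forall i, Sig 0 i <= 1.
  move=> i; pose e := delta_mx 0 i : 'rV[R]_d1.
  have h1 : nrm2 (e *m U^T *m W^T *m S) <= 1.
    apply: le_trans (nrm2_contr _ hS) _.
    rewrite nrm2_iso; last by rewrite trmxK.
    rewrite nrm2_iso; last by rewrite trmxK.
    by rewrite nrm2_delta1.
  have h2 : nrm2 (e *m U^T *m W^T *m S) = Sig 0 i ^+ 2.
    rewrite -!mulmxA (mulmxA U^T) hUWS mulmxA nrm2_iso; last by rewrite trmxK.
    exact: nrm2_delta.
  move: h1; rewrite h2 => h1; have := hSig i; nra.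
split; first by rewrite trmx_mul submxMl.
split; first exact: rk _ _ _ hWU.
exists (Num.sqrt (\sum_(i < d1) acos (Sig 0 i) ^+ 2)); split.
  split; first exact: rk _ _ _ hS.
  split; first exact: rk _ _ _ hWU.
  exists S, (W *m U), Sig.
  split; first by split=> //; rewrite !submx_refl.
  split; first by split=> //; rewrite !submx_refl.
  split=> //; split=> //; exists V, 1%:M; split=> //; split; first by rewrite /orthonormal_cols trmx1 mulmx1.
  by rewrite trmx1 mulmx1 mulmxA hSt -mulmxA hU mulmx1.
move=> Y hYW hY r' [_ [_ [A [B [s [[hA hAS] [[hB hBY] [[hs [P [Q [hP [hQ hM]]]]] ->]]]]]]]].
rewrite /orthonormal_cols in hA hB hP hQ.
rewrite ler_sqrt; last by apply: sumr_ge0 => i _; apply: sqr_ge0.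
move/andP: hAS => [hAS1 hAS2]; move/andP: hBY => [hBY1 _].
have hBW : (B^T <= W^T)%MS := submx_trans hBY1 hYW.
have eB : B^T *m W *m W^T = B^T.
  by case/submxP: hBW => Z ->; rewrite -!mulmxA (mulmxA W^T) hW mul1mx.
have eA : A = S *m S^T *m A.
  case/submxP: hAS1 => Z hZ.
  have -> : A = S *m Z^T by rewrite -[A]trmxK hZ trmx_mul trmxK.
  by rewrite -!mulmxA (mulmxA S^T) hS mul1mx.
have eAA : A *m A^T *m S = S.
  case/submxP: hAS2 => Z hZ.
  have eS : S = A *m Z^T by rewrite -[S]trmxK hZ trmx_mul trmxK.
  by rewrite eS -!mulmxA (mulmxA A^T) hA mul1mx.
have hN1 : B^T *m A = Q *m diag_mx s *m P^T.
  have -> : B^T *m A = (A^T *m B)^T by rewrite trmx_mul trmxK.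
  by rewrite hM !trmx_mul trmxK tr_diag_mx mulmxA.
have hN2 : B^T *m A = (B^T *m W *m U) *m diag_mx Sig *m (V^T *m S^T *m A).
  rewrite -{1}eB {1}eA !mulmxA -(mulmxA (B^T *m W) W^T S) hsvd !mulmxA //.
have hG : (V^T *m S^T *m A) *m (V^T *m S^T *m A)^T = 1%:M.
  rewrite !trmx_mul !trmxK !mulmxA -(mulmxA (V^T *m S^T) A A^T).
  rewrite -(mulmxA (V^T *m S^T) (A *m A^T) S) eAA -(mulmxA V^T S^T S) hS mulmx1.
  exact: hV.
have hDp : forall v, nrm2 (v *m (B^T *m W *m U)) <= nrm2 v.
  move=> v; rewrite !mulmxA; apply: le_trans (nrm2_contr _ hU) _.
  rewrite nrm2_proj // nrm2_iso //; by rewrite trmxK.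
have hcnt : forall t : R, (count (fun i => (t < s 0 i)%R) (enum 'I_d1) <=
                        count (fun i => (t < Sig 0 i)%R) (enum 'I_d1))%N.
  move=> t; have [ht|ht] := leP 0 t.
    exact: (key hQ hP hN1 hN2 hG hDp hSig ht).
  apply: leq_trans (count_size _ _) _.
  rewrite leq_eqVlt; apply/orP; left; rewrite eq_sym -all_count.
  by apply/allP => i _ /=; apply: lt_le_trans ht (hSig i).
have ->: \sum_(i < d1) acos (s 0 i) ^+ 2 = \sum_(x <- [seq s 0 i | i <- enum 'I_d1]) acos x ^+ 2.
  by rewrite big_map enumT.
have ->: \sum_(i < d1) acos (Sig 0 i) ^+ 2 = \sum_(x <- [seq Sig 0 i | i <- enum 'I_d1]) acos x ^+ 2.
  by rewrite big_map enumT.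
apply: seq_dom.
- by rewrite !size_map.
- by move=> x /mapP [i _ ->].
- by move=> x /mapP [i _ ->].
- move=> x y h0 hxy hy1.
  have hx1 : -1 <= x by apply: le_trans h0; rewrite lerN10.
  have hy0 : -1 <= y <= 1 by rewrite hy1 (le_trans hx1 hxy).
  rewrite lerXn2r // ?nnegrE ?acos_ge0 ?hx1 ?(le_trans hxy hy1) //.
  exact: acos_le.
- by move=> t; rewrite !count_map; have := hcnt t; rewrite !enumT.
Qed.
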